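(* Assume the setting below with $Y_i(0)=0$ for all $i=1,\dots,N$. Fix $1\le k\le N$ and $c\in\mathbb{R}$, and define $$p^{\mathrm H}_{k,c} \equiv G_{\mathrm H}\big(n(c);\,N,\,N-k,\,N_1\big).$$ Then $p^{\mathrm H}_{k,c}$ is a valid $p$-value for testing the null hypothesis $H_{k,c}:\ \tau_{(k)}\le c$. That is, whenever $H_{k,c}$ holds, $\Pr\big(p^{\mathrm H}_{k,c}\le\alpha\big)\le\alpha$ for every $\alpha\in(0,1)$. Here the probability is over the random assignment $Z$.
   Context: Setting: - There are $N$ units. Each unit $i$ has fixed (non-random) potential outcomes $Y_i(1),Y_i(0)\in\mathbb{R}$ and individual treatment effect (ITE) $\tau_i=Y_i(1)-Y_i(0)$. - The sorted ITEs are $\tau_{(1)}\le\tau_{(2)}\le\dots\le\tau_{(N)}$. - Completely randomized experiment (CRE): for a fixed $1\le N_1<N$, the assignment vector $Z=(Z_1,\dots,Z_N)\in\{0,1\}^N$ is uniformly distributed over all vectors with exactly $N_1$ ones. Unit $i$ is treated if $Z_i=1$. - The observed outcome is $Y_i=Z_iY_i(1)+(1-Z_i)Y_i(0)$. - For $c\in\mathbb{R}$, let $N(c)=\sum_{i=1}^N\mathbb{1}(\tau_i>c)$ and $n(c)=\sum_{i=1}^N Z_i\mathbb{1}(Y_i>c)$. - The null hypothesis $H_{k,c}$ is $\tau_{(k)}\le c$, which is equivalent to $N(c)\le N-k$. - $G_{\mathrm H}(x;N,n,N_1)=\Pr(X\ge x)$, where $X$ is Hypergeometric with parameters $(N,n,N_1)$: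 the number of marked items in a simple random sample of size $N_1$ drawn without replacement from a population of $N$ items, of which $n$ are marked. *)

(* Defs.v *)
From HB Require Import structures.
From mathcomp Require Import all_boot all_order all_algebra.
Set Implicit Arguments. Unset Strict Implicit. Unset Printing Implicit Defensive.
Import Order.TTheory GRing.Theory Num.Theory.
Local Open Scope ring_scope.

Section Defs.
Variable R : realFieldType.
Variable N : nat.

Definition ite (Y1 Y0 : 'I_N -> R) (i : 'I_N) : R := Y1 i - Y0 i.

(* k-th smallest ITE, tau_(k), 1-based k *)
Definition tau_ord (Y1 Y0 : 'I_N -> R) (k : nat) : R :=
  nth 0 (sort <=%R [seq ite Y1 Y0 i | i <- enum 'I_N]) k.-1.

Definition assignment := {ffun 'I_N -> bool}.
Definition cre_support (N1 : nat) : {set assignment} :=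
  [set z : assignment | #|[set i | z i]| == N1].

Definition cre_prob (N1 : nat) (E : pred assignment) : R :=
  #|[set z in cre_support N1 | E z]|%:R / #|cre_support N1|%:R.

Definition obs (Y1 Y0 : 'I_N -> R) (z : assignment) (i : 'I_N) : R :=
  if z i then Y1 i else Y0 i.

Definition n_stat (Y1 Y0 : 'I_N -> R) (c : R) (z : assignment) : nat :=
  #|[set i | z i && (c < obs Y1 Y0 z i)]|.

End Defs.

(* G_H(x; N, n, N1) = Pr(X >= x), X ~ Hypergeometric(N, n, N1):
   pmf P(X = j) = C(n,j) C(N-n, N1-j) / C(N, N1), j = 0..N1 *)
Definition G_H (R : realFieldType) (x Ntot n N1 : nat) : R :=
  \sum_(j < N1.+1 | (x <= j)%N)
     ('C(n, j) * 'C(Ntot - n, N1 - j))%:R / 'C(Ntot, N1)%:R.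

Definition pH (R : realFieldType) (N : nat) (Y1 Y0 : 'I_N -> R) (N1 k : nat) (c : R)
  (z : assignment N) : R :=
  G_H R (n_stat Y1 Y0 c z) N (N - k) N1.

(* Main.v *)
Require Import Defs.
From HB Require Import structures.
From mathcomp Require Import all_boot all_order all_algebra.
Import Order.TTheory GRing.Theory Num.Theory.

Lemma card_count (T : finType) (P : pred T) : #|[set x | P x]| = count P (enum T).
Proof. by rewrite cardsE cardE enumT /enum_mem size_filter. Qed.

Lemma split_part (U : finType) (T : {set U}) (p : {set U} * {set U}) :
  p.1 \subset T -> p.2 \subset ~: T ->
  p.1 = (p.1 :|: p.2) :&: T /\ p.2 = (p.1 :|: p.2) :\: T.
Proof.
case: p => B1 B2 /= h1 h2; split.
  rewrite setIUl (setIidPl h1).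
  have -> : B2 :&: T = set0.
    apply/setP => x; rewrite !inE; apply/negbTE; apply/negP => /andP [hx hT].
    by have := subsetP h2 x hx; rewrite inE hT.
  by rewrite setU0.
rewrite setDUl.
have -> : B1 :\: T = set0.
  apply/setP => x; rewrite !inE; apply/negbTE; apply/negP => /andP [hT hx].
  by have := subsetP h1 x hx; rewrite (negbTE hT).
rewrite set0U; apply/setP => x; rewrite !inE; apply/idP/idP => [hx|/andP[]//].
by have := subsetP h2 x hx; rewrite inE => ->.
Qed.

Lemma count_sets (U : finType) (T : {set U}) (m j : nat) : (j <= m)%N ->
  #|[set A : {set U} | (#|A| == m) && (#|A :&: T| == j)]| =
  ('C(#|T|, j) * 'C(#|U| - #|T|, m - j))%N.
Proof.
move=> hjm.
set D1 := [set B : {set U} | B \subset T & #|B| == j].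
set D2 := [set B : {set U} | B \subset ~: T & #|B| == m - j].
have inj : {in setX D1 D2 &, injective (fun p : {set U} * {set U} => p.1 :|: p.2)}.
  move=> [a1 a2] [b1 b2]; rewrite !inE /= => /andP[/andP[ha1 _] /andP[ha2 _]]
    /andP[/andP[hb1 _] /andP[hb2 _]] e.
  have [e1 e2] := @split_part _ T (a1, a2) ha1 ha2.
  have [f1 f2] := @split_part _ T (b1, b2) hb1 hb2.
  rewrite /= in e1 e2 f1 f2 e.
  by congr pair; [rewrite [LHS]e1 [RHS]f1 e | rewrite [LHS]e2 [RHS]f2 e].
have -> : [set A : {set U} | (#|A| == m) && (#|A :&: T| == j)] =
   (fun p : {set U} * {set U} => p.1 :|: p.2) @: setX D1 D2.
  apply/setP => A; rewrite inE; apply/idP/idP.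
    move=> /andP [/eqP hA /eqP hAT]; apply/imsetP.
    exists (A :&: T, A :\: T); last by rewrite /= setID.
    rewrite !inE subsetIr hAT eqxx /=.
    have := cardsID T A; rewrite hA hAT => hs.
    have -> : #|A :\: T| = (m - j)%N by rewrite -hs addKn.
    rewrite eqxx andbT; apply/subsetP => x; rewrite !inE => /andP[].
    by [].
  move=> /imsetP [[B1 B2]]; rewrite !inE /= => /andP [/andP[h1 /eqP c1] /andP[h2 /eqP c2]] ->.
  have [e1 e2] := @split_part _ T (B1, B2) h1 h2; rewrite /= in e1 e2.
  rewrite -e1 c1 eqxx andbT.
  by rewrite -(cardsID T (B1 :|: B2)) -e1 -e2 c1 c2 subnKC.
rewrite (card_in_imset inj) cardsX cards_draws.
have -> : #|D2| = 'C(#|~: T|, m - j) by rewrite cards_draws.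
by rewrite -(cardsC T) addKn.
Qed.

Lemma card_assign (U : finType) (P : pred {set U}) :
  #|[set z : {ffun U -> bool} | P [set i | z i]]| = #|[set A : {set U} | P A]|.
Proof.
rewrite -(card_imset _ (f := fun z : {ffun U -> bool} => [set i | z i])); last first.
  move=> z1 z2 e; apply/ffunP => i.
  by have := congr1 (fun A : {set U} => i \in A) e; rewrite !inE.
apply: eq_card => A; rewrite [in RHS]inE; apply/imsetP/idP.
  by move=> [z]; rewrite inE => hz ->.
move=> hA; exists [ffun i => i \in A].
  rewrite inE.
  have -> : [set i | [ffun i => i \in A] i] = A by apply/setP => i; rewrite inE ffunE.
  by [].
by apply/setP => i; rewrite inE ffunE.
Qed.

Local Open Scope ring_scope.

Lemma null_count (R : realFieldType) (N : nat) (Y1 Y0 : 'I_N -> R) (k : nat) (c : R) :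
  (forall i, Y0 i = 0) -> (1 <= k)%N -> (k <= N)%N -> tau_ord Y1 Y0 k <= c ->
  (#|[set i | (c < Y1 i)%R]| <= N - k)%N.
Proof.
move=> H0 k1 kN htau.
rewrite card_count.
have -> : count (fun i : 'I_N => c < Y1 i) (enum 'I_N) =
    count (fun x : R => c < x) [seq ite Y1 Y0 i | i <- enum 'I_N].
  by rewrite count_map; apply: eq_count => i /=; rewrite /ite H0 subr0.
rewrite -((permP (permEl (perm_sort <=%R _))) (fun x : R => c < x)).
move: htau; rewrite /tau_ord.
set s := sort _ _ => htau.
have ss : size s = N by rewrite size_sort size_map size_enum_ord.
have so : sorted <=%R s := sort_sorted (@le_total _ R) _.
rewrite -(cat_take_drop k s) count_cat.
have -> : count (fun x => c < x) (take k s) = 0%N.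
  apply/eqP; rewrite -leqn0 leqNgt -has_count -all_predC; apply/(all_nthP 0) => i hi.
  rewrite size_takel in hi; last by rewrite ss.
  rewrite nth_take //= -leNgt; apply: le_trans htau.
  apply: (sorted_leq_nth le_trans lexx 0 so); rewrite ?inE ?ss.
  - exact: leq_trans hi kN.
  - by rewrite prednK // (leq_trans _ kN).
  - by rewrite -ltnS prednK.
rewrite add0n; apply: leq_trans (count_size _ _) _; by rewrite size_drop ss.
Qed.

Theorem proposition1 (R : realFieldType) (N N1 : nat) (Y1 Y0 : 'I_N -> R)
  (k : nat) (c : R) :
  (1 <= N1)%N -> (N1 < N)%N ->
  (forall i, Y0 i = 0) ->
  (1 <= k)%N -> (k <= N)%N ->
  tau_ord Y1 Y0 k <= c ->
  forall alpha : R, 0 < alpha -> alpha < 1 ->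
    @cre_prob R N N1 (fun z => pH Y1 Y0 N1 k c z <= alpha) <= alpha.
Proof.
move=> hN1 hN1N H0 hk hkN htau alpha ha0 ha1.
set S := [set i | (c < Y1 i)%R].
have hS : (#|S| <= N - k)%N := @null_count R N Y1 Y0 k c H0 hk hkN htau.
have [T sST cT] : exists2 T : {set 'I_N}, S \subset T & #|T| = (N - k)%N.
  set r := (N - k - #|S|)%N.
  have : (0 < #|[set A : {set 'I_N} | A \subset ~: S & #|A| == r]|)%N.
    have hC : #|~: S| = (N - #|S|)%N by rewrite cardsCs setCK card_ord.
    by rewrite cards_draws bin_gt0 hC /r leq_sub2r // leq_subr.
  case/card_gt0P => A; rewrite inE => /andP[hA /eqP cA].
  exists (S :|: A); first exact: subsetUl.
  have h0 : #|S :&: A| = 0%N.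
    apply/eqP; rewrite cards_eq0; apply/eqP/setP => x; rewrite !inE.
    apply/negbTE/negP => /andP[hx hy]; have := subsetP hA x hy; rewrite !inE. by rewrite hx.
  by rewrite cardsU h0 subn0 cA /r subnKC.
set X := fun z : assignment N => #|[set i | z i] :&: T|.
have nle : forall z, (n_stat Y1 Y0 c z <= X z)%N.
  move=> z; apply: subset_leq_card; apply/subsetP => i; rewrite !inE /obs.
  case/andP => zi; rewrite zi => hc /=; apply: (subsetP sST); by rewrite inE.
set G := fun x => G_H R x N (N - k) N1.
have Gmono : forall x y, (x <= y)%N -> G y <= G x.
  move=> x y hxy; rewrite /G /G_H [leRHS]big_mkcond [leLHS]big_mkcond /=.
  apply: ler_sum => j _.
  case: ifP => hy; first by rewrite (leq_trans hxy hy).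
  case: ifP => _ //; apply: divr_ge0; exact: ler0n.
have ex : exists x, (fun x => G x <= alpha) x.
  exists N1.+1; rewrite /G /G_H big1 ?ltW // => j hj.
  by rewrite leqNgt ltn_ord in hj.
case: (ex_minnP ex) => x0 Gx0 minx0.
have hsupp : #|cre_support N N1| = 'C(N, N1).
  have := @card_assign _ (fun A : {set 'I_N} => #|A| == N1); rewrite /= => e.
  by rewrite /cre_support e card_draws card_ord.
have Cpos : (0 < 'C(N, N1))%N by rewrite bin_gt0 ltnW.
have XleN1 : forall z, z \in cre_support N N1 -> (X z <= N1)%N.
  move=> z; rewrite inE => /eqP <-; apply: subset_leq_card; exact: subsetIl.
have hcount : #|[set z in cre_support N N1 | (x0 <= X z)%N]| =
    (\sum_(j < N1.+1 | (x0 <= j)%N) ('C(N - k, j) * 'C(N - (N - k), N1 - j)))%N.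
  rewrite -sum1_card.
  rewrite (partition_big (fun z => inord (X z) : 'I_N1.+1) (fun j : 'I_N1.+1 => (x0 <= j)%N)); last first.
    move=> z; rewrite inE => /andP [hz hx]; by rewrite inordK // ltnS XleN1.
  apply: eq_bigr => j hj; rewrite sum1_card.
  transitivity #|[set z : assignment N | (#|[set i | z i]| == N1) && (#|[set i | z i] :&: T| == j)]|.
    apply: eq_card => z; rewrite unfold_in /= !inE.
    case hz: (#|[set i | z i]| == N1) => //=.
    have hX : (X z <= N1)%N by apply: XleN1; rewrite inE hz.
    apply/idP/idP.
      by case/andP => _ /eqP <-; rewrite inordK.
    move=> /eqP hXj.
    rewrite /X hXj hj /=; apply/eqP/val_inj; by rewrite /= inordK.
  have := @card_assign _ (fun A : {set 'I_N} => (#|A| == N1) && (#|A :&: T| == j)); rewrite /= => ->.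
  by rewrite count_sets ?card_ord ?cT // -ltnS.
rewrite /cre_prob hsupp.
apply: (@le_trans _ _ (#|[set z in cre_support N N1 | (x0 <= X z)%N]|%:R / 'C(N, N1)%:R)).
  rewrite ler_pM2r ?invr_gt0 ?ltr0n // ler_nat; apply: subset_leq_card.
  apply/subsetP => z; rewrite !inE => /andP[-> hp] /=.
  apply: minx0; apply: le_trans hp; exact: Gmono (nle z).
rewrite hcount; apply: le_trans Gx0; rewrite /G /G_H natr_sum mulr_suml.
by [].
Qed.
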